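(* Let $n\ge2$, $k\in\{1,\dots,n\}$ and let $W_1,\dots,W_n$ be the Pauli strings on $n-1$ qubits defined in the context. Then for every $m\in\{1,\dots,n-1\}$, the operator $G_m=iW_{m+1}W_m$ is, up to sign, a Pauli string acting nontrivially on at most two qubits, and these lie among the adjacent qubits $m$ and $m+1$.
   Context: $X_j,Y_j,Z_j$ are Pauli operators on qubit $j$ of an $(n-1)$-qubit system; empty products of $Z$'s are the identity. For $k\ne n$: for $1\le j<k$, $W_j=Y_jZ_{j+1}\cdots Z_{k-1}Y_k$; $W_k=Z_k$; for $k<j<n$, $W_j=X_kZ_{k+1}\cdots Z_{j-1}X_j$; and $W_n=X_kZ_{k+1}\cdots Z_{n-1}$. For $k=n$: for $1\le j<n$, $W_j=-Z_1Z_2\cdots Z_{j-1}X_j$; $W_n=\prod_{j=1}^{n-1}Z_j$. *)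

(* Defs.v *)
(* Operators on the (N)-qubit space (C^2)^{(x)N} are
   represented as matrices indexed by computational-basis bit strings. *)
From mathcomp Require Import all_boot all_order all_algebra algC.
Set Implicit Arguments. Unset Strict Implicit. Unset Printing Implicit Defensive.
Import GRing.Theory Num.Theory.
Local Open Scope ring_scope.

(* computational basis of N qubits: qubit i (0-based ordinal) has bit x i *)
Definition bits (N : nat) := {ffun 'I_N -> bool}.

Definition op (N : nat) := bits N -> bits N -> algC.

Definition opmul N (A B : op N) : op N :=
  fun x y => \sum_(z : bits N) A x z * B z y.
Definition opid (N : nat) : op N := fun x y => (x == y)%:R.
Definition opscale N (c : algC) (A : op N) : op N := fun x y => c * A x y.

(* single-qubit Pauli matrices, basis |0> = false, |1> = true *)
Inductive pauli := PI | PX | PY | PZ.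

Definition pmat (p : pauli) (a b : bool) : algC :=
  match p with
  | PI => (a == b)%:R
  | PX => (a != b)%:R
  | PY => if a == b then 0 else if a then 'i else - 'i
  | PZ => if a == b then (if a then -1 else 1) else 0
  end.

Definition pstring N (p : 'I_N -> pauli) : op N :=
  fun x y => \prod_(i : 'I_N) pmat (p i) (x i) (y i).

(* sigma acting on qubit j (1-based, j in 1..N), identity elsewhere *)
Definition on_qubit N (s : pauli) (j : nat) : op N :=
  pstring (fun i : 'I_N => if i.+1 == j then s else PI).

Definition Xq N j : op N := @on_qubit N PX j.
Definition Yq N j : op N := @on_qubit N PY j.
Definition Zq N j : op N := @on_qubit N PZ j.
Arguments Xq : clear implicits.
Arguments Yq : clear implicits.
Arguments Zq : clear implicits.

Definition opprod N (l : seq (op N)) : op N := foldr (@opmul N) (@opid N) l.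

(* Z_a Z_{a+1} ... Z_{b-1}  (identity if b <= a) *)
Definition Zs N (a b : nat) : op N := @opprod N [seq Zq N j | j <- iota a (b - a)].
Arguments Zs : clear implicits.

Definition W (n k j : nat) : op (n.-1) :=
  let N := n.-1 in
  if (k != n)%N then
    if (j < k)%N then opmul (Yq N j) (opmul (Zs N j.+1 k) (Yq N k))
    else if (j == k)%N then Zq N k
    else if (j < n)%N then opmul (Xq N k) (opmul (Zs N k.+1 j) (Xq N j))
    else opmul (Xq N k) (Zs N k.+1 n)
  else
    if (j < n)%N then opscale (-1) (opmul (Zs N 1 j) (Xq N j))
    else Zs N 1 n.
Arguments W : clear implicits.

(* Main.v *)
Require Import Defs.
From mathcomp Require Import all_boot all_order all_algebra algC zify.
From Stdlib Require Import FunctionalExtensionality.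
Import GRing.Theory Num.Theory.
Local Open Scope ring_scope.

Definition pm (a b : pauli) : pauli :=
  match a, b with
  | PI, x => x | x, PI => x
  | PX, PX | PY, PY | PZ, PZ => PI
  | PX, PY | PY, PX => PZ
  | PY, PZ | PZ, PY => PX
  | PZ, PX | PX, PZ => PY
  end.
Definition ph (a b : pauli) : algC :=
  match a, b with
  | PX, PY | PY, PZ | PZ, PX => 'i
  | PY, PX | PZ, PY | PX, PZ => - 'i
  | _, _ => 1
  end.

Lemma ii : 'i * 'i = -1 :> algC.
Proof. by rewrite -expr2 sqrCi. Qed.

Lemma pmat_mul a c x y :
  \sum_(b : bool) pmat a x b * pmat c b y = ph a c * pmat (pm a c) x y.
Proof.
rewrite big_bool.
case: a; case: c; case: x; case: y;
 rewrite /= ?(mul0r, mulr0, mul1r, mulr1, add0r, addr0, mulr1n, mulr0n, mulrN, mulNr, opprK, ii) //.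
Qed.

Definition mul1 (u v : algC * pauli) : algC * pauli :=
  (u.1 * v.1 * ph u.2 v.2, pm u.2 v.2).

Definition PS N (f : 'I_N -> algC * pauli) : op N :=
  fun (x y : bits N) => \prod_(i : 'I_N) ((f i).1 * pmat (f i).2 (x i) (y i)).
Definition PSn N (h : nat -> algC * pauli) : op N := @PS N (fun i : 'I_N => h i.+1).
Arguments PS {N}.

Lemma PS_mul N (f g : 'I_N -> algC * pauli) :
  opmul (PS f) (PS g) = PS (fun i => mul1 (f i) (g i)).
Proof.
apply: functional_extensionality => x; apply: functional_extensionality => y.
rewrite /opmul /PS.
under eq_bigr => z _ do rewrite -big_split /=.
rewrite -(bigA_distr_bigA (fun i b => (f i).1 * pmat (f i).2 (x i) b * ((g i).1 * pmat (g i).2 b (y i)))).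
apply: eq_bigr => i _ /=.
have -> : \sum_(b : bool) (f i).1 * pmat (f i).2 (x i) b * ((g i).1 * pmat (g i).2 b (y i))
  = (f i).1 * (g i).1 * \sum_(b : bool) pmat (f i).2 (x i) b * pmat (g i).2 b (y i).
  rewrite mulr_sumr; apply: eq_bigr => b _.
  by rewrite mulrA [_ * (g i).1]mulrAC -!mulrA [(g i).1 * _]mulrCA.
by rewrite pmat_mul mulrA.
Qed.

Lemma PSn_mul N (f g : nat -> algC * pauli) :
  opmul (PSn N f) (PSn N g) = PSn N (fun t => mul1 (f t) (g t)).
Proof. exact: PS_mul. Qed.

Lemma pstring_PS N (p : 'I_N -> pauli) : pstring p = PS (fun i => (1, p i)).
Proof.
apply: functional_extensionality => x; apply: functional_extensionality => y.
by rewrite /pstring /PS; apply: eq_bigr => i _; rewrite mul1r.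
Qed.

Lemma on_qubitE N s j :
  @on_qubit N s j = PSn N (fun t => (1, if t == j then s else PI)).
Proof. by rewrite /on_qubit pstring_PS. Qed.

Lemma opidE N : @opid N = PSn N (fun _ => (1, PI)).
Proof.
apply: functional_extensionality => x; apply: functional_extensionality => y.
rewrite /opid /PSn /PS /=.
case: (eqVneq x y) => [->|neq].
  by rewrite big1 // => i _; rewrite eqxx mul1r.
have [i hi] : exists i, x i != y i.
  apply/existsP; apply: contraT; rewrite negb_exists => /forallP h.
  by move: neq; rewrite (_ : x = y) ?eqxx //; apply/ffunP => i; apply/eqP; rewrite -[_ == _]negbK h.
by rewrite (bigD1 i) //= (negbTE hi) mulr0 mul0r.
Qed.

Lemma opmulZl N c (A B : op N) : opmul (opscale c A) B = opscale c (opmul A B).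
Proof.
apply: functional_extensionality => x; apply: functional_extensionality => y.
by rewrite /opmul /opscale mulr_sumr; apply: eq_bigr => z _; rewrite mulrA.
Qed.
Lemma opmulZr N c (A B : op N) : opmul A (opscale c B) = opscale c (opmul A B).
Proof.
apply: functional_extensionality => x; apply: functional_extensionality => y.
by rewrite /opmul /opscale mulr_sumr; apply: eq_bigr => z _; rewrite mulrCA.
Qed.
Lemma opscaleZ N c d (A : op N) : opscale c (opscale d A) = opscale (c * d) A.
Proof.
apply: functional_extensionality => x; apply: functional_extensionality => y.
by rewrite /opscale mulrA.
Qed.

Ltac brute := repeat (case: ifP => ?; try (exfalso; lia)).

Lemma mul1_I u : mul1 (1, PI) u = u.
Proof. by case: u => c a; rewrite /mul1 /= !mul1r mulr1; case: a. Qed.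

Lemma opprod_iota N l a :
  opprod [seq Zq N j | j <- iota a l] =
  PSn N (fun t => (1, if ((a <= t) && (t < a + l))%N then PZ else PI)).
Proof.
elim: l a => [|l IH] a /=.
  rewrite opidE; congr PSn; apply: functional_extensionality => t.
  by brute.
rewrite IH /Zq on_qubitE PSn_mul; congr PSn; apply: functional_extensionality => t.
by brute; rewrite /mul1 /= ?mulr1 ?mul1r.
Qed.

Lemma ZsE N a b : Zs N a b = PSn N (fun t => (1, if ((a <= t) && (t < b))%N then PZ else PI)).
Proof.
rewrite /Zs opprod_iota; congr PSn; apply: functional_extensionality => t.
by brute.
Qed.

Lemma PS_split N (f : 'I_N -> algC * pauli) :
  PS f = opscale (\prod_i (f i).1) (pstring (fun i => (f i).2)).
Proof.
apply: functional_extensionality => x; apply: functional_extensionality => y.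
by rewrite /PS /opscale /pstring big_split.
Qed.

Lemma prod_two N m (G : nat -> algC) :
  (1 <= m <= N)%N ->
  (forall t, (1 <= t <= N)%N -> t != m -> t != m.+1 -> G t = 1) ->
  \prod_(i < N) G i.+1 = G m * (if (m < N)%N then G m.+1 else 1).
Proof.
move=> hm hG.
rewrite -(big_mkord xpredT (fun i => G i.+1)).
rewrite (big_cat_nat _ (n := m.-1)) //=; last lia.
rewrite big_nat_cond big1 ?mul1r; last first.
  move=> i /andP [/andP [_ hi] _]; apply: hG; lia.
rewrite big_ltn; last lia.
have -> : m.-1.+1 = m by lia.
case: ifP => hmN.
  rewrite big_ltn // big_nat_cond big1 ?mulr1 //.
  move=> i /andP [/andP [hi1 hi2] _]; apply: hG; lia.
by rewrite big_geq ?mulr1 //; lia.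
Qed.

Lemma finish N m (H : nat -> algC * pauli) c :
  (1 <= m <= N)%N ->
  (forall t, (1 <= t <= N)%N -> t != m -> t != m.+1 -> H t = (1, PI)) ->
  (c * ((H m).1 * (if (m < N)%N then (H m.+1).1 else 1)) = 1 \/
   c * ((H m).1 * (if (m < N)%N then (H m.+1).1 else 1)) = -1) ->
  exists (s : algC) (p : 'I_N -> pauli),
    (s = 1 \/ s = -1) /\ opscale c (PSn N H) = opscale s (pstring p) /\
    (forall i : 'I_N, p i <> PI -> i.+1 = m \/ i.+1 = m.+1).
Proof.
move=> hm hH hs.
exists (c * ((H m).1 * (if (m < N)%N then (H m.+1).1 else 1))), (fun i => (H i.+1).2).
split; first done.
split.
  rewrite /PSn PS_split opscaleZ; congr opscale; congr (_ * _).
  apply: (@prod_two N m (fun t => (H t).1)) => // t ht1 ht2 ht3.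
  by rewrite hH.
move=> i hp.
case: (eqVneq i.+1 m) => [->|h1]; first by left.
case: (eqVneq i.+1 m.+1) => [->|h2]; first by right.
by exfalso; apply: hp; rewrite hH //; have := ltn_ord i; lia.
Qed.

Theorem lemma4 (n k : nat) (hn : (2 <= n)%N) (hk : (1 <= k <= n)%N) (m : nat)
  (hm : (1 <= m <= n.-1)%N) :
  exists (s : algC) (p : 'I_(n.-1) -> pauli),
    (s = 1 \/ s = -1) /\
    opscale 'i (opmul (W n k m.+1) (W n k m)) = opscale s (pstring p) /\
    (forall i : 'I_(n.-1), p i <> PI -> i.+1 = m \/ i.+1 = m.+1).
Proof.
rewrite /W /Xq /Yq /Zq.
brute.
all: rewrite ?on_qubitE ?ZsE ?(opmulZl, opmulZr, opscaleZ, PSn_mul).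
all: apply: finish; [lia | move=> t ht1 ht2 ht3; brute; rewrite /mul1 /= ?(mulr1, mul1r) // | ].
all: brute; rewrite /mul1 /= ?(mulr1, mul1r).
all: rewrite ?(mulrN, mulNr, mulr1, mul1r, opprK, ii); by [left | right].
Qed.
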